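(* In $G=BS(1,2)$, the subgroup $\mathbb{Z}[1/2]$ has rational conjugacy growth: the series $\sum_{n\geq0}c_0(n)z^n$ is rational, where $c_0(n)$ is the number of conjugacy classes of $G$ contained in $\mathbb{Z}[1/2]$ whose length with respect to $\{a,t\}$ equals $n$.
   Context: $BS(1,2)=\langle a,t\mid tat^{-1}=a^2\rangle\cong \mathbb{Z}[1/2]\rtimes\mathbb{Z}$ via $a\mapsto(1,0)$, $t\mapsto(0,1)$, the generator of $\mathbb{Z}$ acting by multiplication by $2$; $\mathbb{Z}[1/2]=\{(x,0)\}$. The length of a conjugacy class is the minimal word length of its elements. A series is rational if it is a quotient of two polynomials with integer coefficients. *)

(* Defs.v *)
From mathcomp Require Import all_boot all_order all_algebra.
Set Implicit Arguments. Unset Strict Implicit. Unset Printing Implicit Defensive.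
Import Order.TTheory GRing.Theory Num.Theory.
Local Open Scope ring_scope.

(* BS(1,2) realised as Z[1/2] ⋊ Z inside rat * int:
   (x,k) * (y,l) = (x + 2^k y, k + l); a = (1,0), t = (0,1).
   The group G is the set of values of words in a, t (and inverses). *)
Definition BS := (rat * int)%type.

Definition bs_mul (g h : BS) : BS := (g.1 + (2%:Q ^ g.2) * h.1, g.2 + h.2).
Definition bs_inv (g : BS) : BS := (- ((2%:Q ^ (- g.2)) * g.1), - g.2).

Inductive gen := GA | GAinv | GT | GTinv.

Definition gen_val (s : gen) : BS :=
  match s with
  | GA => (1, 0) | GAinv => (-1, 0) | GT => (0, 1) | GTinv => (0, -1)
  end.

Definition eval (w : seq gen) : BS := foldr (fun s g => bs_mul (gen_val s) g) (0, 0) w.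

Definition bs_conj (g h : BS) : Prop :=
  exists u : seq gen, h = bs_mul (bs_mul (eval u) g) (bs_inv (eval u)).

Definition conj_class (g : BS) : BS -> Prop := bs_conj g.

Definition class_length (g : BS) (n : nat) : Prop :=
  (exists w : seq gen, size w = n /\ bs_conj g (eval w)) /\
  (forall w : seq gen, bs_conj g (eval w) -> (n <= size w)%N).

Definition classes_in_Z2_of_length (n : nat) (C : BS -> Prop) : Prop :=
  exists w : seq gen, C = conj_class (eval w) /\
    (forall h, C h -> h.2 = 0) /\ class_length (eval w) n.

Definition has_card (T : Type) (A : T -> Prop) (k : nat) : Prop :=
  exists f : 'I_k -> T, injective f /\ (forall x, A x <-> exists i, f i = x).

(* the series sum_n c(n) z^n is a quotient P/Q of integer polynomials,
   i.e. Q * (sum c(n) z^n) = P as formal power series, with Q <> 0 *)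
Definition rational_series (c : nat -> nat) : Prop :=
  exists P Q : {poly int}, Q != 0 /\
    forall n : nat, \sum_(i < n.+1) Q`_i * (c (n - i)%N)%:Z = P`_n.

(* Main.v *)
Require Import Defs.
From mathcomp Require Import all_boot all_order all_algebra.
From mathcomp Require Import zify ring.
From Stdlib Require Import Lia FunctionalExtensionality PropExtensionality.
Set Implicit Arguments. Unset Strict Implicit. Unset Printing Implicit Defensive.
Import Order.TTheory GRing.Theory Num.Theory.
Local Open Scope ring_scope.


Fixpoint F (m : int) (H : nat) : nat :=
  match H with
  | 0 => absz m
  | H'.+1 => if (m %% 2)%Z == 0 then F (m %/ 2)%Z H'
             else (minn (F ((m - 1) %/ 2)%Z H') (F ((m + 1) %/ 2)%Z H')).+1
  end.

Lemma F_even q H : F (2 * q) H.+1 = F q H.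
Proof.
rewrite /=. have -> : ((2 * q) %% 2)%Z == 0 by apply/eqP; lia.
by have -> : ((2 * q) %/ 2)%Z = q by lia.
Qed.

Lemma F_odd q H : F (2 * q + 1) H.+1 = (minn (F q H) (F (q + 1) H)).+1.
Proof.
rewrite /=. have -> : ((2 * q + 1) %% 2)%Z == 0 = false by apply/eqP; lia.
have -> : ((2 * q + 1 - 1) %/ 2)%Z = q by lia.
by have -> : ((2 * q + 1 + 1) %/ 2)%Z = q + 1 by lia.
Qed.

Lemma int_split (m : int) : exists q, m = 2 * q \/ m = 2 * q + 1.
Proof. exists (m %/ 2)%Z; lia. Qed.

Lemma F_zero H : F 0 H = 0%N.
Proof. elim: H => [//|H IH]. by rewrite -(mulr0 2) F_even. Qed.

Lemma F_lip H : forall h, (h <= H)%N -> forall m,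
  (F (m + 2 ^+ h) H <= (F m H).+1)%N /\ (F (m - 2 ^+ h) H <= (F m H).+1)%N.
Proof.
elim: H => [|H IH] h hH m.
  have -> : h = 0%N by lia.
  rewrite expr0 /=; lia.
have [q [->|->]] := int_split m.
- case: h hH => [|h] hH.
  + rewrite expr0.
    have -> : 2 * q - 1 = 2 * (q - 1) + 1 by lia.
    rewrite !F_odd F_even. have -> : q - 1 + 1 = q by lia. lia.
  + rewrite exprS.
    have -> : 2 * q + 2 * 2 ^+ h = 2 * (q + 2 ^+ h) by lia.
    have -> : 2 * q - 2 * 2 ^+ h = 2 * (q - 2 ^+ h) by lia.
    rewrite !F_even. have := IH h hH q. lia.
- case: h hH => [|h] hH.
  + rewrite expr0.
    have -> : 2 * q + 1 + 1 = 2 * (q + 1) by lia.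
    have -> : 2 * q + 1 - 1 = 2 * q by lia.
    rewrite !F_odd !F_even.
    have := IH 0%N (leq0n _) q. have := IH 0%N (leq0n _) (q + 1).
    rewrite expr0. have -> : q + 1 - 1 = q by lia. lia.
  + rewrite exprS.
    have -> : 2 * q + 1 + 2 * 2 ^+ h = 2 * (q + 2 ^+ h) + 1 by lia.
    have -> : 2 * q + 1 - 2 * 2 ^+ h = 2 * (q - 2 ^+ h) + 1 by lia.
    rewrite !F_odd.
    have := IH h hH q. have := IH h hH (q + 1).
    have -> : q + 1 + 2 ^+ h = q + 2 ^+ h + 1 by lia.
    have -> : q + 1 - 2 ^+ h = q - 2 ^+ h + 1 by lia.
    lia.
Qed.

Lemma F_lip1 H m : (F (m + 1) H <= (F m H).+1)%N /\ (F (m - 1) H <= (F m H).+1)%N.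
Proof. by have := F_lip (leq0n H) m; rewrite expr0. Qed.

Lemma F_neg H : forall m, F (- m) H = F m H.
Proof.
elim: H => [|H IH] m; first by rewrite /= abszN.
have [q [->|->]] := int_split m.
  have -> : - (2 * q) = 2 * (- q) by lia.
  by rewrite !F_even IH.
have -> : - (2 * q + 1) = 2 * (- q - 1) + 1 by lia.
rewrite !F_odd. have -> : - q - 1 + 1 = - q by lia.
rewrite IH. have -> : - q - 1 = - (q + 1) by lia.
rewrite IH minnC //.
Qed.

Lemma F_bound H : forall m, (absz m <= F m H * 2 ^ H)%N.
Proof.
elim: H => [|H IH] m; first by rewrite muln1.
have [q [->|->]] := int_split m.
  rewrite F_even expnS. have := IH q. lia.
rewrite F_odd expnS. have := IH q. have := IH (q + 1).
have : (0 < 2 ^ H)%N by rewrite expn_gt0.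
move=> h1 h2 h3.
case: (leqP (F q H) (F (q+1) H)) => hm; nia.
Qed.

Lemma F4p q H : F (4 * q + 1) H.+2 = (F q H).+1.
Proof.
have -> : 4 * q + 1 = 2 * (2 * q) + 1 by lia.
rewrite F_odd F_even F_odd. have := F_lip1 H (q + 1). have -> : q + 1 - 1 = q by lia. lia.
Qed.

Lemma F4m q H : F (4 * q - 1) H.+2 = (F q H).+1.
Proof.
have -> : 4 * q - 1 = 2 * (2 * q - 1) + 1 by lia.
have -> : 2 * q - 1 = 2 * (q - 1) + 1 by lia.
rewrite F_odd F_odd. have -> : 2 * (q - 1) + 1 + 1 = 2 * q by lia.
rewrite F_even. have -> : q - 1 + 1 = q by lia.
have := F_lip1 H (q - 1). have -> : q - 1 + 1 = q by lia. lia.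
Qed.

Fixpoint Lupto (m : int) (K : nat) : nat :=
  match K with 0 => absz m | K'.+1 => minn (Lupto m K') (2 * K'.+1 + F m K'.+1)%N end.
Definition L m := Lupto m (absz m).
Lemma Lupto_S m K : Lupto m K.+1 = minn (Lupto m K) (2 * K.+1 + F m K.+1)%N.
Proof. by []. Qed.

Lemma Lupto_le m K H : (H <= K)%N -> (Lupto m K <= 2 * H + F m H)%N.
Proof.
elim: K => [|K IH] hK.
  have -> : H = 0%N by lia. by [].
rewrite Lupto_S.
case: (ltngtP H K.+1) => h; [ | lia | subst; lia].
have := IH ltac:(lia). lia.
Qed.

Lemma Lupto_ex m K : exists2 H, (H <= K)%N & Lupto m K = (2 * H + F m H)%N.
Proof.
elim: K => [|K [H hH IH]]; first by exists 0%N.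
rewrite Lupto_S.
case: (leqP (Lupto m K) (2 * K.+1 + F m K.+1)) => h.
  exists H; first lia. exact IH.
by exists K.+1.
Qed.

Lemma L_le m H : (L m <= 2 * H + F m H)%N.
Proof.
case: (leqP H (absz m)) => h; first exact: Lupto_le.
have := Lupto_le m (leqnn 0). rewrite /L /=.
have : (Lupto m (absz m) <= absz m)%N.
  by have := Lupto_le m (leq0n (absz m)).
lia.
Qed.

Lemma L_ex m : exists H, L m = (2 * H + F m H)%N.
Proof. by have [H _ h] := Lupto_ex m (absz m); exists H. Qed.

Lemma L_abs m : (L m <= absz m)%N.
Proof. by have := L_le m 0. Qed.

Lemma L_neg m : L (- m) = L m.
Proof.
apply/eqP; rewrite eqn_leq; apply/andP; split.
  have [H ->] := L_ex m. by rewrite -F_neg; apply: L_le.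
have [H ->] := L_ex (- m). by rewrite F_neg; apply: L_le.
Qed.

Lemma L_pow j : forall H m, (L m <= 2 * H + F (2 ^+ j * m) H)%N.
Proof.
elim: j => [|j IH] H m; first by rewrite expr0 mul1r; apply: L_le.
case: H => [|H].
  have := L_abs m. rewrite /= exprS. 
  have : (0 < 2 ^+ j :> int) by rewrite exprn_gt0.
  nia.
rewrite exprS -mulrA F_even. have := IH H m. lia.
Qed.


Lemma F_0 m : F m 0 = absz m. Proof. by []. Qed.

Lemma F1_le q : 0 <= q -> (2 * F q 1 <= absz q + 2)%N.
Proof.
move=> hq; have [r [e|e]] := int_split q; subst q.
  rewrite F_even F_0; lia.
rewrite F_odd !F_0; lia.
Qed.

Lemma L4p m : 3 <= m -> L (4 * m + 1) = (L m + 5)%N.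
Proof.
move=> hm; apply/eqP; rewrite eqn_leq; apply/andP; split.
  have [H ->] := L_ex m. have := L_le (4 * m + 1) H.+2. rewrite F4p. lia.
have [H' ->] := L_ex (4 * m + 1). have := L_abs m.
case: H' => [|[|H]].
- rewrite F_0; lia.
- have -> : 4 * m + 1 = 2 * (2 * m) + 1 by lia.
  rewrite F_odd !F_0; lia.
- rewrite F4p. have := L_le m H. lia.
Qed.

Lemma L4m m : 3 <= m -> L (4 * m - 1) = (L m + 5)%N.
Proof.
move=> hm; apply/eqP; rewrite eqn_leq; apply/andP; split.
  have [H ->] := L_ex m. have := L_le (4 * m - 1) H.+2. rewrite F4m. lia.
have [H' ->] := L_ex (4 * m - 1). have := L_abs m.
case: H' => [|[|H]].
- rewrite F_0; lia.
- have -> : 4 * m - 1 = 2 * (2 * m - 1) + 1 by lia.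
  rewrite F_odd !F_0; lia.
- rewrite F4m. have := L_le m H. lia.
Qed.

Lemma Lphi_p q : 9 <= q -> L (8 * q + 1) = (L (4 * q + 1) + 2)%N.
Proof.
move=> hq.
have key : forall H, F (8 * q + 1) H.+3 = F (4 * q + 1) H.+2.
  move=> H. have -> : 8 * q + 1 = 4 * (2 * q) + 1 by lia.
  by rewrite F4p F4p F_even.
have bnd : (L (4 * q + 1) <= 7 + F q 1)%N.
  by have := L_le (4 * q + 1) 3; rewrite F4p.
have := F1_le (ltW (lt_le_trans (isT : (0:int) < 9) hq)).
move=> hF.
apply/eqP; rewrite eqn_leq; apply/andP; split.
  have [H0 e] := L_ex (4 * q + 1).
  case: H0 e => [|[|H]] e.
  - rewrite F_0 in e; lia.
  - have E : F (4 * q + 1) 1 = (minn (absz (2 * q)) (absz (2 * q + 1))).+1.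
      by rewrite (_ : 4 * q + 1 = 2 * (2 * q) + 1); [rewrite F_odd | lia].
    rewrite E in e; lia.
  - have := L_le (8 * q + 1) H.+3. rewrite key. lia.
have [H' ->] := L_ex (8 * q + 1).
case: H' => [|[|[|H]]].
- rewrite F_0; lia.
- have -> : 8 * q + 1 = 2 * (4 * q) + 1 by lia.
  rewrite F_odd !F_0; lia.
- have -> : 8 * q + 1 = 4 * (2 * q) + 1 by lia.
  rewrite F4p F_0; lia.
- rewrite key. have := L_le (4 * q + 1) H.+2. lia.
Qed.

Lemma Lphi_m q : 9 <= q -> L (8 * q - 1) = (L (4 * q - 1) + 2)%N.
Proof.
move=> hq.
have key : forall H, F (8 * q - 1) H.+3 = F (4 * q - 1) H.+2.
  move=> H. have -> : 8 * q - 1 = 4 * (2 * q) - 1 by lia.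
  by rewrite F4m F4m F_even.
have bnd : (L (4 * q - 1) <= 7 + F q 1)%N.
  by have := L_le (4 * q - 1) 3; rewrite F4m.
have := F1_le (ltW (lt_le_trans (isT : (0:int) < 9) hq)).
move=> hF.
apply/eqP; rewrite eqn_leq; apply/andP; split.
  have [H0 e] := L_ex (4 * q - 1).
  case: H0 e => [|[|H]] e.
  - rewrite F_0 in e; lia.
  - have E : F (4 * q - 1) 1 = (minn (absz (2 * q - 1)%R) (absz (2 * q - 1 + 1)%R)).+1.
      by rewrite (_ : 4 * q - 1 = 2 * (2 * q - 1) + 1); [rewrite F_odd | lia].
    rewrite E in e; lia.
  - have := L_le (8 * q - 1) H.+3. rewrite key. lia.
have [H' ->] := L_ex (8 * q - 1).
case: H' => [|[|[|H]]].
- rewrite F_0; lia.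
- have -> : 8 * q - 1 = 2 * (4 * q - 1) + 1 by lia.
  rewrite F_odd !F_0; lia.
- have -> : 8 * q - 1 = 4 * (2 * q) - 1 by lia.
  rewrite F4m F_0; lia.
- rewrite key. have := L_le (4 * q - 1) H.+2. lia.
Qed.

Lemma L_big m : 25 <= m -> (10 <= L m)%N.
Proof.
move=> hm. have [H e] := L_ex m. have hb := F_bound H m. rewrite e.
case: H {e} hb => [|[|[|[|[|H]]]]] hb; rewrite ?expnS ?expn0 in hb; lia.
Qed.

Lemma L_pos m : m != 0 -> (1 <= L m)%N.
Proof.
move=> hm. have [H e] := L_ex m. have hb := F_bound H m. rewrite e.
move: hb; case: (F m H) => [|k]; lia.
Qed.

Fixpoint fp (m : int) (H : nat) : nat * nat :=
  match H with
  | 0 => (absz m, absz (m + 1))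
  | H'.+1 => let (x, y) := fp (m %/ 2)%Z H' in
             if (m %% 2)%Z == 0 then (x, (minn x y).+1) else ((minn x y).+1, y)
  end.

Lemma fp_spec H : forall m, fp m H = (F m H, F (m + 1) H).
Proof.
elim: H => [//|H IH] m.
have [q [->|->]] := int_split m.
  rewrite [fp _ _]/=.
  have -> : ((2 * q) %/ 2)%Z = q by lia.
  have -> : ((2 * q) %% 2)%Z == 0 by apply/eqP; lia.
  by rewrite IH F_even F_odd.
rewrite [fp _ _]/=.
have -> : ((2 * q + 1) %/ 2)%Z = q by lia.
have -> : ((2 * q + 1) %% 2)%Z == 0 = false by apply/eqP; lia.
rewrite IH F_odd. have -> : 2 * q + 1 + 1 = 2 * (q + 1) by lia.
by rewrite F_even.
Qed.

Fixpoint Luptof (m : int) (K : nat) : nat :=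
  match K with 0 => absz m | K'.+1 => minn (Luptof m K') (2 * K'.+1 + (fp m K'.+1).1)%N end.
Definition Lf m := Luptof m (absz m).

Lemma Luptof_E m K : Luptof m K = Lupto m K.
Proof.
elim: K => [//|K IH].
by rewrite Lupto_S -IH /Luptof -/Luptof fp_spec.
Qed.

Lemma Lf_L m : Lf m = L m.
Proof. exact: Luptof_E. Qed.


Lemma chk1 : all (fun k : nat => Lf (8 * k%:Z + 1) == (Lf (4 * k%:Z + 1) + 2)%N) (iota 1 8).
Proof. by vm_compute. Qed.
Lemma chk2 : all (fun k : nat => Lf (8 * k%:Z - 1) == (Lf (4 * k%:Z - 1) + 2)%N) (iota 3 6).
Proof. by vm_compute. Qed.


Definition phi (m : int) : int := if (m %% 4)%Z == 1 then 2 * m - 1 else 2 * m + 1.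

Lemma L_1 : L 1 = 1%N. Proof. by rewrite -Lf_L; vm_compute. Qed.
Lemma L_3 : L 3 = 3%N. Proof. by rewrite -Lf_L; vm_compute. Qed.
Lemma L_7 : L 7 = 6%N. Proof. by rewrite -Lf_L; vm_compute. Qed.
Lemma L_15 : L 15 = 9%N. Proof. by rewrite -Lf_L; vm_compute. Qed.

Lemma Lphi m : 0 < m -> (m %% 2)%Z = 1 -> m != 1 -> m != 3 -> m != 7 ->
  L (phi m) = (L m + 2)%N.
Proof.
move=> h0 h1 n1 n3 n7; rewrite /phi.
case: ifP => /eqP h4.
  set q := (m %/ 4)%Z.
  have -> : 2 * m - 1 = 8 * q + 1 by lia.
  have -> : m = 4 * q + 1 by lia.
  case: (leP 9 q) => hq; first exact: Lphi_p.
  have [k ek] : exists k : nat, q = k by exists (absz q); lia.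
  rewrite ek -!Lf_L. apply/eqP.
  have := allP chk1 k; rewrite mem_iota; apply; lia.
set q := ((m + 1) %/ 4)%Z.
have -> : 2 * m + 1 = 8 * q - 1 by lia.
have -> : m = 4 * q - 1 by lia.
case: (leP 9 q) => hq; first exact: Lphi_m.
have [k ek] : exists k : nat, q = k by exists (absz q); lia.
rewrite ek -!Lf_L. apply/eqP.
have := allP chk2 k; rewrite mem_iota; apply; lia.
Qed.

Definition tbl (n : nat) : seq int :=
  match n with
  | 1 => [:: 1] | 3 => [:: 3] | 5 => [:: 5] | 6 => [:: 7] | 7 => [:: 9]
  | 8 => [:: 11; 13] | 9 => [:: 15; 17] | _ => [::] end.

Fixpoint Sl (n : nat) : seq int :=
  match n with
  | S (S ((S (S (S n5))) as n2)) =>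
      if (n < 10)%N then tbl n
      else [seq phi x | x <- Sl n2] ++ ([seq 4 * x - 1 | x <- Sl n5] ++ [seq 4 * x + 1 | x <- Sl n5])
  | _ => tbl n
  end.

Lemma Sl_small n : (n < 10)%N -> Sl n = tbl n.
Proof. by case: n => [|[|[|[|[|n5]]]]] //= ->. Qed.

Lemma Sl_big n : (10 <= n)%N -> Sl n =
  [seq phi x | x <- Sl (n - 2)] ++ ([seq 4 * x - 1 | x <- Sl (n - 5)] ++ [seq 4 * x + 1 | x <- Sl (n - 5)]).
Proof.
case: n => [|[|[|[|[|n5]]]]] //= hn.
rewrite ltnNge hn /=.
by rewrite !subSS subn0.
Qed.

Definition oddz (m : int) := (m %% 2)%Z == 1.

Lemma chk3 : all (fun k : nat => all (fun n : nat =>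
   ((k%:Z) \in tbl n) == [&& (0 < k)%N, oddz k & Lf k == n]) (iota 0 10)) (iota 1 24).
Proof. by vm_compute. Qed.

Lemma chk4 : all (fun n => all (fun x : int => (0 < x) && (x < 25)) (tbl n)) (iota 0 10).
Proof. by vm_compute. Qed.

Lemma chk5 : all (fun n => uniq (tbl n)) (iota 0 10).
Proof. by vm_compute. Qed.


Lemma phi_pos m : 0 < m -> oddz m -> (0 < phi m) && oddz (phi m).
Proof. rewrite /oddz /phi => h0 /eqP h1; case: ifP => /eqP h4; apply/andP; split; apply/eqP || idtac; lia. Qed.

Lemma Sl_spec n : forall m, (m \in Sl n) = [&& 0 < m, oddz m & L m == n].
Proof.
elim/ltn_ind: n => n IH m.
case: (ltnP n 10) => hn.
  rewrite Sl_small //.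
  have hn' : n \in iota 0 10 by rewrite mem_iota.
  case: (ltP 0 m) => h0; last first.
    have -> : (m \in tbl n) = false.
      apply/negbTE/negP => hm.
      have := allP (allP chk4 n hn') m hm. lia.
    by [].
  case: (ltP m 25) => h25; last first.
    have -> : (m \in tbl n) = false.
      apply/negbTE/negP => hm.
      have := allP (allP chk4 n hn') m hm. lia.
    have hL10 := L_big h25.
    have -> : (L m == n) = false by apply/negbTE/eqP; lia.
    by rewrite !andbF.
  have [k ek] : exists k : nat, m = k by exists (absz m); lia.
  have hk : k \in iota 1 24 by rewrite mem_iota; lia.
  rewrite ek (eqP (allP (allP chk3 k hk) n hn')) Lf_L; have -> : (0 < k)%N by lia.
  by [].
rewrite Sl_big // !mem_cat.
apply/idP/idP.
  case/orP => [/mapP [m' hm' ->] | /orP [] /mapP [m' hm' ->]];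
    rewrite IH in hm'; try lia; case/and3P: hm' => hp ho /eqP hL.
  - have [n1 n3 n7] : [/\ m' != 1, m' != 3 & m' != 7].
      split; apply/eqP => e; move: hL; rewrite e ?L_1 ?L_3 ?L_7; lia.
    have := phi_pos hp ho; case/andP => -> -> /=.
    move: ho; rewrite /oddz => /eqP ho.
    by rewrite Lphi //; apply/eqP; lia.
  - have hm3 : 3 <= m' by have := L_abs m'; lia.
    move: ho; rewrite /oddz => /eqP ho.
    rewrite L4m //; apply/and3P; split; [lia | apply/eqP; lia | apply/eqP; lia].
  - have hm3 : 3 <= m' by have := L_abs m'; lia.
    move: ho; rewrite /oddz => /eqP ho.
    rewrite L4p //; apply/and3P; split; [lia | apply/eqP; lia | apply/eqP; lia].
case/and3P => hp; rewrite /oddz => /eqP ho /eqP hL.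
have hm10 : 10 <= m by have := L_abs m; lia.
have : (m %% 8)%Z = 1 \/ (m %% 8)%Z = 3 \/ (m %% 8)%Z = 5 \/ (m %% 8)%Z = 7 by lia.
case=> [h8|[h8|[h8|h8]]].
- apply/orP; left; apply/mapP; exists ((m + 1) %/ 2)%Z.
    rewrite IH; last by lia.
    have e : L m = (L ((m + 1) %/ 2)%Z + 2)%N.
      rewrite -Lphi; try (apply/eqP; lia); try lia.
      by congr L; rewrite /phi ifT; [lia | apply/eqP; lia].
    apply/and3P; split; [lia | apply/eqP; lia | apply/eqP; lia].
  by rewrite /phi ifT; [lia | apply/eqP; lia].
- apply/orP; right; apply/orP; left; apply/mapP; exists ((m + 1) %/ 4)%Z; last by lia.
  rewrite IH; last by lia.
  have e : L m = (L ((m + 1) %/ 4)%Z + 5)%N.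
    rewrite -L4m; last by lia. by congr L; lia.
  apply/and3P; split; [lia | apply/eqP; lia | apply/eqP; lia].
- apply/orP; right; apply/orP; right; apply/mapP; exists ((m - 1) %/ 4)%Z; last by lia.
  rewrite IH; last by lia.
  have e : L m = (L ((m - 1) %/ 4)%Z + 5)%N.
    rewrite -L4p; last by lia. by congr L; lia.
  apply/and3P; split; [lia | apply/eqP; lia | apply/eqP; lia].
- have n15 : m != 15 by apply/eqP => e; move: hL; rewrite e L_15; lia.
  apply/orP; left; apply/mapP; exists ((m - 1) %/ 2)%Z.
    rewrite IH; last by lia.
    have e : L m = (L ((m - 1) %/ 2)%Z + 2)%N.
      rewrite -Lphi; try (apply/eqP; lia); try lia.
      by congr L; rewrite /phi ifF; [lia | apply/eqP; lia].
    apply/and3P; split; [lia | apply/eqP; lia | apply/eqP; lia].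
  by rewrite /phi ifF; [lia | apply/eqP; lia].
Qed.

Lemma Sl_uniq n : uniq (Sl n).
Proof.
elim/ltn_ind: n => n IH.
case: (ltnP n 10) => hn.
  by rewrite Sl_small // (allP chk5 n) // mem_iota.
rewrite Sl_big // !cat_uniq.
have Hs : forall k x, x \in Sl k -> 0 < x /\ (x %% 2)%Z = 1.
  by move=> k x; rewrite Sl_spec => /and3P [? /eqP ? _].
apply/and5P; split.
- rewrite map_inj_in_uniq; first (apply: IH; lia).
  move=> x y /Hs [hx ox] /Hs [hy oy]; rewrite /phi.
  case: ifP => /eqP a; case: ifP => /eqP b; lia.
- apply/hasPn => z; rewrite mem_cat => /orP [] /mapP [x /Hs [hx ox] ->];
  apply/negP => /mapP [y /Hs [hy oy]]; rewrite /phi;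
  case: ifP => /eqP a; lia.
- rewrite map_inj_uniq; first (apply: IH; lia). move=> x y; lia.
- apply/hasPn => z /mapP [x /Hs [hx ox] ->]; apply/negP => /mapP [y /Hs [hy oy]]; lia.
- rewrite map_inj_uniq; first (apply: IH; lia). move=> x y; lia.
Qed.


Lemma two_neq0 : (2%:Q : rat) != 0. Proof. by []. Qed.

Lemma bs_mulA g h k : bs_mul (bs_mul g h) k = bs_mul g (bs_mul h k).
Proof.
case: g => [g1 g2]; case: h => [h1 h2]; case: k => [k1 k2]; rewrite /bs_mul /=.
by rewrite expfzDr ?two_neq0 // mulrDr addrA mulrA addrA.
Qed.

Lemma bs_mul0 g : bs_mul (0, 0) g = g.
Proof. by case: g => [g1 g2]; rewrite /bs_mul /= expr0z mul1r !add0r. Qed.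

Lemma eval_cat u v : eval (u ++ v) = bs_mul (eval u) (eval v).
Proof.
elim: u => [|s u IH] /=; first by rewrite bs_mul0.
by rewrite IH bs_mulA.
Qed.

Definition tdelta (s : gen) : int :=
  match s with GT => 1 | GTinv => -1 | _ => 0 end.
Definition isTg (s : gen) : bool := match s with GT | GTinv => true | _ => false end.

Fixpoint tsum (w : seq gen) : int := match w with [::] => 0 | s :: w' => tdelta s + tsum w' end.
Fixpoint tcnt (w : seq gen) : nat := match w with [::] => 0%N | s :: w' => (isTg s + tcnt w')%N end.
Fixpoint acnt (w : seq gen) : nat := match w with [::] => 0%N | s :: w' => (~~ isTg s + acnt w')%N end.

Lemma cnt_size w : (acnt w + tcnt w)%N = size w.
Proof. elim: w => [//|s w IH] /=; case: s; lia. Qed.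

Lemma eval_snd w : (eval w).2 = tsum w.
Proof. elim: w => [//|s w IH] /=; rewrite IH; by case: s. Qed.

Fixpoint minh (w : seq gen) (s : int) : int :=
  match w with [::] => s | x :: w' => Num.min s (minh w' (s + tdelta x)) end.
Fixpoint maxh (w : seq gen) (s : int) : int :=
  match w with [::] => s | x :: w' => Num.max s (maxh w' (s + tdelta x)) end.
Fixpoint hin (w : seq gen) (s lo hi : int) : bool :=
  (lo <= s <= hi) && (match w with [::] => true | x :: w' => hin w' (s + tdelta x) lo hi end).

Lemma tdelta_abs s : `|tdelta s| = (isTg s)%:Z.
Proof. by case: s. Qed.

Lemma minmax_bounds w : forall s,
  [/\ minh w s <= s <= maxh w s & minh w s <= s + tsum w <= maxh w s].
Proof.
elim: w => [|x w IH] s /=; first by split; lia.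
have [h1 h2] := IH (s + tdelta x). split; lia.
Qed.

Lemma hin_minmax w : forall s lo hi, lo <= minh w s -> maxh w s <= hi -> hin w s lo hi.
Proof.
elim: w => [|x w IH] s lo hi /= h1 h2; first lia.
apply/andP; split; first lia. apply: IH; lia.
Qed.

Lemma path_bound w : forall s, 2 * (maxh w s - minh w s) <= (tcnt w)%:Z + `|tsum w|.
Proof.
elim: w => [|x w IH] s /=; first lia.
move: (IH (s + tdelta x)) (minmax_bounds w (s + tdelta x)).
case: x => /= IH1 [h1 h2]; lia.
Qed.

Lemma acount w : forall s lo (H : nat), hin w s lo (lo + H%:Z) ->
  exists N : int, 2%:Q ^ (s - lo) * (eval w).1 = N%:~R /\ (F N H <= acnt w)%N.
Proof.
elim: w => [|x w IH] s lo H /=.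
  move=> _; exists 0; split; first by rewrite mulr0.
  by rewrite F_zero.
case/andP => hs hw.
have [h eh] : exists h : nat, s - lo = h%:Z by exists (absz (s - lo)); lia.
have hH : (h <= H)%N by lia.
case: x hw => /= hw.
- have [N [e1 e2]] := IH _ _ _ hw. rewrite addr0 eh in e1.
  exists (N + 2 ^+ h); split.
    rewrite eh expr0z mul1r mulrDr e1 intrD addrC; congr (_ + _).
    by rewrite mulr1 rmorphXn.
  apply: leq_trans (F_lip hH N).1 _; lia.
- have [N [e1 e2]] := IH _ _ _ hw. rewrite addr0 eh in e1.
  exists (N - 2 ^+ h); split.
    rewrite eh expr0z mul1r mulrDr e1 intrD addrC; congr (_ + _).
    by rewrite mulrN1 intrN rmorphXn.
  apply: leq_trans (F_lip hH N).2 _; lia.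
- have [N [e1 e2]] := IH _ _ _ hw. exists N; split => //.
  rewrite -e1 add0r mulrA -expfzDr ?two_neq0 //. congr (_ ^ _ * _). lia.
- have [N [e1 e2]] := IH _ _ _ hw. exists N; split => //.
  rewrite -e1 add0r mulrA -expfzDr ?two_neq0 //. congr (_ ^ _ * _). lia.
Qed.


Lemma eval_nseqA n : eval (nseq n GA) = (n%:Q, 0).
Proof.
elim: n => [//|n IH] /=; rewrite IH /bs_mul /= expr0z mul1r addr0.
by rewrite -[n.+1]addn1 PoszD intrD addrC.
Qed.

Lemma eval_nseqAi n : eval (nseq n GAinv) = ((- (n%:Z))%:Q, 0).
Proof.
elim: n => [//|n IH] /=; rewrite IH /bs_mul /= expr0z mul1r addr0.
by rewrite -[n.+1]addn1 PoszD opprD intrD addrC.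
Qed.

Lemma eval_nseqT n : eval (nseq n GT) = (0, n%:Z).
Proof.
elim: n => [//|n IH] /=; rewrite IH /bs_mul /= mulr0 addr0.
by rewrite -[n.+1]add1n PoszD.
Qed.

Lemma eval_nseqTi n : eval (nseq n GTinv) = (0, - n%:Z).
Proof.
elim: n => [//|n IH] /=; rewrite IH /bs_mul /= mulr0 addr0.
by rewrite -[n.+1]add1n PoszD opprD.
Qed.

Lemma eval_wrap w q : eval w = (q, 0) -> eval (GT :: rcons w GTinv) = (2%:Q * q, 0).
Proof.
move=> e. rewrite -cats1 /= eval_cat e /= /bs_mul /= !expr0z !mul1r !expr1z.
by rewrite mulr0 !addr0 add0r.
Qed.

Lemma eval_cons s w : eval (s :: w) = bs_mul (gen_val s) (eval w).
Proof. by []. Qed.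

Lemma intr_lin (c a : int) : (c%:~R + 2%:Q * a%:~R : rat) = (c + 2 * a)%:~R.
Proof. by rewrite [in RHS]intrD [in RHS]intrM. Qed.

Fixpoint W (m : int) (H : nat) : seq gen :=
  match H with
  | 0 => if 0 <= m then nseq (absz m) GA else nseq (absz m) GAinv
  | H'.+1 =>
    if (m %% 2)%Z == 0 then GT :: rcons (W (m %/ 2)%Z H') GTinv
    else if (F ((m - 1) %/ 2)%Z H' <= F ((m + 1) %/ 2)%Z H')%N
         then GA :: GT :: rcons (W ((m - 1) %/ 2)%Z H') GTinv
         else GAinv :: GT :: rcons (W ((m + 1) %/ 2)%Z H') GTinv
  end.

Lemma W_spec H : forall m, eval (W m H) = (m%:~R, 0) /\ size (W m H) = (2 * H + F m H)%N.
Proof.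
elim: H => [|H IH] m.
  rewrite [W _ 0]/= F_0; case: ifP => h.
    rewrite eval_nseqA size_nseq; split => //. congr (_, _). congr intmul; lia.
  rewrite eval_nseqAi size_nseq; split => //. congr (_, _). congr intmul; lia.
rewrite [W _ _]/=.
case: ifP => /eqP h2.
  set q := (m %/ 2)%Z. have [e s] := IH q.
  have hm : m = 2 * q by lia.
  split.
    by rewrite (eval_wrap e) hm intrM.
  rewrite hm F_even [size _]/= size_rcons s; lia.
set a := ((m - 1) %/ 2)%Z; set b := ((m + 1) %/ 2)%Z.
have hma : m = 2 * a + 1 by lia.
have hb : b = a + 1 by lia.
have hF : F m H.+1 = (minn (F a H) (F b H)).+1 by rewrite hma F_odd hb.
case: ifP => hab.
  have [e s] := IH a.
  split; last by rewrite hF [size _]/= size_rcons s; lia.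
  rewrite eval_cons (eval_wrap e).
  rewrite /bs_mul /= expr0z mul1r addr0; congr (_, _).
  rewrite (_ : m = 1 + 2 * a); last lia. exact: (intr_lin 1 a).
have [e s] := IH b.
split; last by rewrite hF [size _]/= size_rcons s; lia.
rewrite eval_cons (eval_wrap e).
rewrite /bs_mul /= expr0z mul1r addr0; congr (_, _).
rewrite (_ : m = -1 + 2 * b); last lia. exact: (intr_lin (-1) b).
Qed.


Lemma conj_formula y k x :
  bs_mul (bs_mul (y, k) (x, 0)) (bs_inv (y, k)) = (2%:Q ^ k * x, 0).
Proof.
rewrite /bs_mul /bs_inv /= !addr0 subrr; congr (_, _).
rewrite mulrN mulrA -expfzDr ?two_neq0 // subrr expr0z mul1r.
by rewrite addrAC subrr add0r.
Qed.

Lemma exists_word_k (k : int) : exists u, (eval u).2 = k.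
Proof.
case: (lerP 0 k) => hk.
  exists (nseq (absz k) GT); rewrite eval_nseqT /=; lia.
exists (nseq (absz k) GTinv); rewrite eval_nseqTi /=; lia.
Qed.

Lemma conj_char x h : bs_conj (x, 0) h <-> exists k : int, h = (2%:Q ^ k * x, 0).
Proof.
split.
  case=> u ->. case: (eval u) => y k. by exists k; rewrite conj_formula.
case=> k ->. have [u hu] := exists_word_k k. exists u.
by move: hu; case: (eval u) => y k' /= ->; rewrite conj_formula.
Qed.


Lemma intr2X p : ((2 ^+ p : int)%:~R : rat) = 2%:Q ^+ p.
Proof. elim: p => [//|p IH]; by rewrite !exprS intrM IH. Qed.

Lemma pow_odd_int (m N j : int) : oddz m -> 2%:Q ^ j * m%:~R = N%:~R ->
  exists p : nat, j = p%:Z /\ N = 2 ^+ p * m.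
Proof.
rewrite /oddz => /eqP ho.
case: j => [p|p] e.
  exists p; split => //. apply: (@intr_inj rat). by rewrite intrM intr2X.
exfalso.
have e2 : (m%:~R : rat) = 2%:Q ^+ p.+1 * N%:~R.
  rewrite -e mulrA. change (m%:~R = 2%:Q ^+ p.+1 * (2%:Q ^+ p.+1)^-1 * m%:~R :> rat).
  by rewrite mulfV ?expf_neq0 ?two_neq0 // mul1r.
have e3 : m = 2 * (2 ^+ p * N).
  apply: (@intr_inj rat). by rewrite e2 mulrA -exprS intrM intr2X.
lia.
Qed.

Lemma lower w (m k : int) : oddz m -> eval w = (2%:Q ^ k * m%:~R, 0) -> (L m <= size w)%N.
Proof.
move=> ho e.
set lo := minh w 0; set hi := maxh w 0.
have [hb1 hb2] := minmax_bounds w 0.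
have hts : tsum w = 0 by rewrite -eval_snd e.
have [H eH] : exists H : nat, hi - lo = H%:Z by exists (absz (hi - lo)); lia.
have hw : hin w 0 lo (lo + H%:Z) by apply: hin_minmax; rewrite /lo /hi; lia.
have [N [e1 e2]] := acount hw.
have hp := path_bound w 0. rewrite -/lo -/hi hts in hp.
rewrite e /= mulrA -expfzDr ?two_neq0 // in e1.
have [p [_ eN]] := pow_odd_int ho e1.
have hL := L_pow p H m. rewrite -eN in hL.
rewrite -cnt_size. lia.
Qed.

Lemma dyadic w : exists (N : int) (e : nat), (eval w).1 * 2%:Q ^+ e = N%:~R.
Proof.
elim: w => [|s w [N [e IH]]]; first by exists 0, 0%N; rewrite /= mul0r.
case: s; rewrite eval_cons /bs_mul /=.
- exists (2 ^+ e + N), e. by rewrite expr0z mul1r mulrDl IH mul1r [in RHS]intrD intr2X.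
- exists (N - 2 ^+ e), e. by rewrite expr0z mul1r mulrDl IH mulN1r [in RHS]intrD [in RHS]intrN intr2X addrC.
- exists (2 * N), e. by rewrite add0r expr1z -mulrA IH intrM.
- exists N, e.+1. rewrite add0r exprN1 exprS -IH. field. exact: two_neq0.
Qed.

Lemma odd_decomp (N : int) : N != 0 -> exists (v : nat) (m : int), N = 2 ^+ v * m /\ oddz m.
Proof.
have [n hn] : exists n : nat, (absz N <= n)%N by exists (absz N).
elim: n N hn => [|n IH] N hn hN; first lia.
case: (boolP (oddz N)) => ho; first by exists 0%N, N; rewrite expr0 mul1r.
have [v [m [e1 e2]]] := IH (N %/ 2)%Z ltac:(rewrite /oddz in ho; lia) ltac:(rewrite /oddz in ho; lia).
exists v.+1, m; split => //. rewrite exprS -mulrA -e1. rewrite /oddz in ho; lia.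
Qed.


Lemma bs_conj_refl g : bs_conj g g.
Proof.
exists [::]; rewrite /= bs_mul0; case: g => [x e].
rewrite /bs_inv /bs_mul /=; congr (_, _); last lia.
by rewrite ?mulr0 ?oppr0 ?mulr0 ?addr0.
Qed.

Lemma elem_form w : (eval w).2 = 0 ->
  exists m k : int, eval w = (2%:Q ^ k * m%:~R, 0) /\ (m = 0 \/ oddz m).
Proof.
move=> h2. have [N [e he]] := dyadic w.
move: h2 he; case: (eval w) => x e2 /= -> he.
case: (altP (N =P 0)) => hN.
  exists 0, 0; split; last by left.
  rewrite mulr0; congr (_, _).
  move: he; rewrite hN => /eqP; rewrite mulf_eq0 expf_eq0 /= => /orP [/eqP //|].
  by case/andP => _ /eqP.
have [v [m [e1 e3]]] := odd_decomp hN.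
exists m, (v%:Z - e%:Z); split; last by right.
congr (_, _).
have hx : x = N%:~R / 2%:Q ^+ e by rewrite -he mulfK ?expf_neq0 ?two_neq0.
rewrite hx e1 intrM intr2X expfzDr ?two_neq0 // -exprnN.
change (2%:Q ^+ v * m%:~R / 2%:Q ^+ e = 2%:Q ^+ v * (2%:Q ^+ e)^-1 * m%:~R).
by rewrite mulrAC.
Qed.

Lemma class_eq x k : conj_class (2%:Q ^ k * x, 0) = conj_class (x, 0).
Proof.
apply: functional_extensionality => h; apply: propositional_extensionality.
rewrite /conj_class !conj_char; split.
  case=> k' ->. exists (k' + k). by rewrite expfzDr ?two_neq0 // mulrA.
case=> k' ->. exists (k' - k). by rewrite mulrA -expfzDr ?two_neq0 // subrK.
Qed.

Lemma class_length_conj g g' n : conj_class g = conj_class g' ->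
  class_length g n -> class_length g' n.
Proof.
move=> E [[w [hs hc]] hmin]; split.
  exists w; split => //. change (conj_class g' (eval w)); rewrite -E; exact hc.
move=> w' hc'; apply: hmin. change (conj_class g (eval w')); rewrite E; exact hc'.
Qed.

Lemma class_length_uniq g n n' : class_length g n -> class_length g n' -> n = n'.
Proof.
move=> [[w [hs hc]] h1] [[w' [hs' hc']] h2].
have := h1 _ hc'; have := h2 _ hc. lia.
Qed.

Lemma class_length_odd m : oddz m -> class_length (m%:~R, 0) (L m).
Proof.
move=> ho; split.
  have [H eH] := L_ex m. have [e s] := W_spec H m.
  exists (W m H); split; first by rewrite s eH.
  rewrite e; apply/conj_char; exists 0; by rewrite expr0z mul1r.
move=> w /conj_char [k e]. exact: lower ho e.
Qed.

Lemma class_length_zero : class_length (0, 0) 0.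
Proof. split => //. exists [::]; split => //. exact: bs_conj_refl. Qed.

Lemma odd_eq (m m' k : int) : (m = 0 \/ oddz m) -> (m' = 0 \/ oddz m') ->
  2%:Q ^ k * m%:~R = m'%:~R -> m = m'.
Proof.
case=> [->|hm] hm' e.
  move: e; rewrite mulr0 => /esym /eqP; rewrite intr_eq0 => /eqP -> //.
have [p [_ ep]] := pow_odd_int hm e.
move: hm hm'; rewrite /oddz => /eqP hm.
case: p ep => [|p] ep; first by rewrite ep expr0 mul1r.
rewrite exprS -mulrA in ep.
have hX : (0 < 2 ^+ p :> int) by rewrite exprn_gt0.
case => [h|/eqP h]; nia.
Qed.


Definition c0 (n : nat) : nat := ((n == 0%N) + 2 * size (Sl n))%N.
Definition rl (n : nat) : seq int :=
  (if n == 0%N then [:: 0] else [::]) ++ Sl n ++ map (fun x => - x) (Sl n).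

Lemma size_rl n : size (rl n) = c0 n.
Proof. rewrite /rl /c0 !size_cat size_map; case: (n == 0%N) => /=; lia. Qed.

Lemma Sl_mem n x : x \in Sl n -> [/\ 0 < x, oddz x & L x = n].
Proof. by rewrite Sl_spec => /and3P [? ? /eqP]. Qed.

Lemma rl_mem n x : x \in rl n ->
  (x = 0 /\ n = 0%N) \/ (oddz x /\ L x = n).
Proof.
rewrite /rl !mem_cat => /orP [|/orP [/Sl_mem [_ ? ?]|/mapP [y /Sl_mem [_ hy ly] ->]]].
- by case: eqP => // -> ; rewrite inE => /eqP ->; left.
- by right.
- right; split; last by rewrite L_neg.
  move: hy; rewrite /oddz => /eqP hy; apply/eqP; lia.
Qed.

Lemma rl_uniq n : uniq (rl n).
Proof.
rewrite /rl !cat_uniq Sl_uniq map_inj_uniq ?Sl_uniq /=; last by move=> x y; lia.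
rewrite andbT; apply/and3P; split.
- by case: (n == 0%N).
- apply/hasPn => z; rewrite mem_cat => /orP [/Sl_mem [h _ _]|/mapP [y /Sl_mem [h _ _] ->]];
  case: (n == 0%N) => //=; rewrite inE; apply/eqP; lia.
- apply/hasPn => z /mapP [y /Sl_mem [h _ _] ->]; apply/negP => /Sl_mem [h' _ _]; lia.
Qed.

Lemma has_card_n n : has_card (classes_in_Z2_of_length n) (c0 n).
Proof.
pose f (i : 'I_(c0 n)) := conj_class ((nth 0 (rl n) i)%:~R, 0).
have hlt : forall i : 'I_(c0 n), (i < size (rl n))%N by move=> i; rewrite size_rl.
exists f; split.
  move=> i j e.
  have hj : conj_class ((nth 0 (rl n) i)%:~R, 0) ((nth 0 (rl n) j)%:~R, 0).
    rewrite -/(f i) e; exact: bs_conj_refl.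
  move/conj_char: hj => [k [ek]].
  have ri := rl_mem (mem_nth 0 (hlt i)); have rj := rl_mem (mem_nth 0 (hlt j)).
  have h0 : forall x n, (x = 0 /\ n = 0%N) \/ (oddz x /\ L x = n) -> x = 0 \/ oddz x.
    by move=> x n' [[]|[]]; [left|right].
  have := odd_eq (h0 _ _ ri) (h0 _ _ rj) (esym ek).
  move/eqP; rewrite nth_uniq ?hlt ?rl_uniq // => /eqP hij.
  exact: val_inj.
move=> C; split.
  case=> w [-> [hall hlen]].
  have h2 : (eval w).2 = 0 by apply: hall; exact: bs_conj_refl.
  have [m [k [ew hm]]] := elem_form h2.
  rewrite ew class_eq.
  rewrite ew in hlen. have hlen' := class_length_conj (class_eq _ _) hlen.
  have hmem : m \in rl n.
    case: hm => [hm0|hmo].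
      subst m. have := class_length_uniq hlen' class_length_zero => ->.
      by rewrite /rl mem_cat inE eqxx.
    have eL := class_length_uniq hlen' (class_length_odd hmo). subst n.
    rewrite /rl !mem_cat; apply/orP; right; apply/orP.
    case: (ltP 0 m) => hpos.
      by left; rewrite Sl_spec hpos hmo eqxx.
    right; apply/mapP; exists (- m); last by rewrite opprK.
    rewrite Sl_spec L_neg eqxx andbT; move: hmo; rewrite /oddz => /eqP hmo.
    apply/andP; split; [lia | apply/eqP; lia].
  have hi : (index m (rl n) < c0 n)%N by rewrite -size_rl index_mem.
  exists (Ordinal hi). by rewrite /f /= nth_index.
case=> i <-.
set a := nth 0 (rl n) i.
have [ea sa] := W_spec 0 a.
exists (W a 0); split.
  by rewrite ea.
split.
  by move=> h /conj_char [k ->].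
rewrite ea.
have := rl_mem (mem_nth 0 (hlt i)); rewrite -/a.
case => [[-> ->]|[ho <-]].
  exact: class_length_zero.
exact: class_length_odd.
Qed.

Definition qs : seq int := [:: 1; 0; -1; 0; 0; -2].
Definition ps : seq int := [:: 1; 2; -1; 0; 0; -2; -2; 0; -2; 2].

Lemma chk_ser : all (fun n => (\sum_(0 <= i < n.+1) (nth 0 qs i) * (c0 (n - i))%:Z) == nth 0 ps n) (iota 0 10).
Proof. rewrite unlock. by vm_compute. Qed.

Lemma c0_rec n : (10 <= n)%N -> c0 n = (c0 (n - 2) + 2 * c0 (n - 5))%N.
Proof.
move=> hn. rewrite /c0 Sl_big // !size_cat !size_map.
have -> : (n == 0%N) = false by apply/eqP; lia.
have -> : (n - 2 == 0)%N = false by apply/eqP; lia.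
have -> : (n - 5 == 0)%N = false by apply/eqP; lia.
simpl; lia.
Qed.

Lemma series_ok n : \sum_(i < n.+1) (Poly qs)`_i * (c0 (n - i))%:Z = (Poly ps)`_n.
Proof.
under eq_bigr do rewrite coef_Poly. rewrite coef_Poly.
rewrite -(big_mkord xpredT (fun i => qs`_i * (c0 (n - i))%:Z)).
case: (ltnP n 10) => hn.
  apply/eqP; have := allP chk_ser n; rewrite mem_iota; apply; lia.
rewrite nth_default; last by [].
rewrite (big_cat_nat _ (n := 6)) //=; last lia.
rewrite [X in _ + X]big1_seq; last first.
  move=> i; rewrite mem_index_iota => /and3P [_ hi _].
  rewrite nth_default ?mul0r //; exact: hi.
rewrite addr0 unlock /=.
have := c0_rec hn. rewrite subn0. lia.
Qed.

Theorem proposition3p9 :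
  exists c0 : nat -> nat,
    (forall n : nat, has_card (classes_in_Z2_of_length n) (c0 n)) /\
    rational_series c0.
Proof.
exists c0; split; first exact: has_card_n.
exists (Poly ps), (Poly qs); split; last exact: series_ok.
apply/eqP => h. have := congr1 (fun p : {poly int} => p`_0) h.
by rewrite coef_Poly coef0.
Qed.
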